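(* Let $B$ be a Borel ideal of $S=k[x_1,\dots,x_n]$ and let $m$ be a monomial with $\max(m)=p$. If $m\in\mathrm{Bgens}(B)$ and $\deg m\ge\deg m'$ for all $m'\in\mathrm{Bgens}(B)$, then $\frac{m}{x_p}$ is a $p$-socle for $B$.
   Context: For a monomial $m=x_{i_1}\cdots x_{i_d}$ with $i_1\le\dots\le i_d$, $\max(m)=i_d$. A Borel ideal is a monomial ideal closed under Borel moves $m\mapsto m\frac{x_{i_1}}{x_{j_1}}\cdots\frac{x_{i_s}}{x_{j_s}}$ ($i_t<j_t$, all $x_{j_t}\mid m$); $\mathrm{Bgens}(B)$ is the unique minimal set $T$ of monomials such that $B$ is the smallest Borel ideal containing $T$. A monomial $\nu$ is a $p$-socle for $B$ if $(B:\nu)=(x_1,\dots,x_p)$. *)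

(* Defs.v *)
(* Monomials of S = k[x_1,...,x_n] are exponent vectors;
   a monomial ideal is represented by the set (predicate) of monomials it
   contains. Variables are 0-indexed: x_{i+1} <-> index i : 'I_n. *)
From mathcomp Require Import all_boot all_order.
Set Implicit Arguments. Unset Strict Implicit. Unset Printing Implicit Defensive.

Definition mono (n : nat) := {ffun 'I_n -> nat}.

Definition mmul n (a b : mono n) : mono n := [ffun i => a i + b i].

Definition mdeg n (m : mono n) : nat := \sum_(i < n) m i.

(* m / x_j  (used only when x_j divides m) *)
Definition mdivx n (m : mono n) (j : 'I_n) : mono n :=
  [ffun i => if i == j then (m i).-1 else m i].

Definition bmove n (m : mono n) (i j : 'I_n) : mono n :=
  [ffun k => if k == i then (m k).+1 else if k == j then (m k).-1 else m k].

Definition is_max n (m : mono n) (j : 'I_n) : Prop :=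
  0 < m j /\ forall k : 'I_n, j < k -> m k = 0.

Definition monideal n (B : mono n -> Prop) : Prop :=
  forall a b : mono n, B a -> B (mmul a b).

(* Borel ideal: monomial ideal closed under (elementary, hence all) Borel moves *)
Definition borel n (B : mono n -> Prop) : Prop :=
  monideal B /\
  forall (m : mono n) (i j : 'I_n), i < j -> 0 < m j -> B m -> B (bmove m i j).

Definition bgenerates n (T B : mono n -> Prop) : Prop :=
  [/\ borel B, (forall t, T t -> B t) &
      forall B' : mono n -> Prop, borel B' -> (forall t, T t -> B' t) ->
        forall u, B u -> B' u].

(* T = Bgens(B): a minimal (w.r.t. inclusion) set of monomials generating B
   as a Borel ideal (such a set is unique). *)
Definition is_Bgens n (B T : mono n -> Prop) : Prop :=
  bgenerates T B /\
  forall T' : mono n -> Prop, (forall t, T' t -> T t) -> bgenerates T' B ->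
    forall t, T t -> T' t.

(* nu is a p-socle for B:  (B : nu) = (x_1, ..., x_p), as monomial ideals *)
Definition psocle n (B : mono n -> Prop) (nu : mono n) (p : nat) : Prop :=
  forall mu : mono n, B (mmul mu nu) <-> exists i : 'I_n, i < p /\ 0 < mu i.

(* Main.v *)
Require Import Defs.
From mathcomp Require Import all_boot all_order.
Set Implicit Arguments. Unset Strict Implicit. Unset Printing Implicit Defensive.

Definition e n (i : 'I_n) : mono n := [ffun k => nat_of_bool (k == i)].

Lemma sum_e n (P : pred 'I_n) (i : 'I_n) : \sum_(k | P k) e i k = P i.
Proof.
case: (boolP (P i)) => Pi.
- rewrite (bigD1 i) //= ffunE eqxx big1 // => k /andP[_ /negbTE]; by rewrite ffunE => ->.
- rewrite big1 // => k Pk; rewrite ffunE; case: eqP => // ek; by move: Pi; rewrite -ek Pk.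
Qed.

Lemma bmove_e n (v : mono n) (i j k : 'I_n) : i != j -> 0 < v j ->
  bmove v i j k + e j k = v k + e i k.
Proof.
move=> nij vj; rewrite !ffunE.
have [->|ki] := eqVneq k i.
  by rewrite (negbTE nij) /= addn0 addn1.
have [->|kj] := eqVneq k j.
  by rewrite /= addn0 addn1 prednK.
by [].
Qed.

Lemma sum_bmove n (v : mono n) (i j : 'I_n) (P : pred 'I_n) : i != j -> 0 < v j ->
  \sum_(k | P k) bmove v i j k + P j = \sum_(k | P k) v k + P i.
Proof.
move=> nij vj; rewrite -!(sum_e P) -!big_split /=; apply: eq_bigr => k _; exact: bmove_e.
Qed.

Lemma mdeg_bmove n (v : mono n) (i j : 'I_n) : i != j -> 0 < v j -> mdeg (bmove v i j) = mdeg v.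
Proof.
move=> nij vj; have := sum_bmove (predT) nij vj; rewrite /= !addn1 => -[].
by rewrite /mdeg.
Qed.

Lemma split_sum n (v : mono n) (p : 'I_n) :
  mdeg v = \sum_(i : 'I_n | i <= p) v i + \sum_(i : 'I_n | p < i) v i.
Proof.
rewrite /mdeg (bigID (fun i : 'I_n => i <= p)) /=; congr (_ + _).
by apply: eq_bigl => i; rewrite ltnNge.
Qed.

Lemma fill n (B' : mono n -> Prop) (m : mono n) (p : 'I_n) : borel B' -> is_max m p ->
  forall k v, B' v -> (forall i : 'I_n, i <= p -> v i <= m i) ->
  \sum_(i : 'I_n | p < i) v i = k -> mdeg v <= mdeg m -> B' m.
Proof.
move=> [mon bor] [mp0 mz]; elim=> [|k IH] v Bv vle sk dv.
- have v0 : forall i : 'I_n, p < i -> v i = 0.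
    move=> i Hi; apply/eqP; rewrite -leqn0 -sk.
    by rewrite (bigD1 i) //= leq_addr.
  have vm : forall i, v i <= m i.
    move=> i; case: (leqP i p) => Hi; [exact: vle | by rewrite v0].
  have -> : m = mmul v [ffun i => m i - v i].
    by apply/ffunP => i; rewrite !ffunE subnKC.
  exact: mon.
- case: (pickP (fun j : 'I_n => (p < j) && (0 < v j))) => [j /andP[pj vj] | H]; last first.
    have s0 : \sum_(i : 'I_n | p < i) v i = 0.
      by apply: big1 => i Hi; move: (H i); rewrite Hi /= lt0n => /negbFE/eqP.
    by rewrite s0 in sk.
  case: (pickP (fun i : 'I_n => (i <= p) && (v i < m i))) => [i /andP[ip vi] | H]; last first.
    exfalso; move: dv; rewrite (split_sum m p) (split_sum v p) sk.
    have -> : \sum_(i : 'I_n | p < i) m i = 0 by rewrite big1 // => i Hi; apply: mz.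
    rewrite addn0 => H2.
    have : \sum_(i : 'I_n | i <= p) m i <= \sum_(i : 'I_n | i <= p) v i.
      apply: leq_sum => i Hi; move: (H i); rewrite Hi /= => /negbT; by rewrite -leqNgt.
    move=> H3; have := leq_trans H2 H3; by rewrite addnS ltnNge leq_addr.
  have ij : i < j by apply: leq_ltn_trans ip pj.
  have nij : i != j by apply/eqP => eij; move: ij; rewrite eij ltnn.
  apply: (IH (bmove v i j)).
  + exact: bor.
  + move=> i' Hi'; rewrite ffunE; case: eqP => [->|_]; first by [].
    case: eqP => [ej|_]; last exact: vle.
    by move: pj; rewrite -ej ltnNge Hi'.
  + have := sum_bmove (fun i => p < i) nij vj; rewrite /= pj sk.
    rewrite ltnNge ip /= addn0 addn1 => -[].
    by [].
  + by rewrite mdeg_bmove.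
Qed.

Theorem lemma3p15 (n : nat) (B T : mono n -> Prop) (m : mono n) (p : 'I_n) :
  borel B -> is_Bgens B T -> is_max m p -> T m ->
  (forall m' : mono n, T m' -> mdeg m' <= mdeg m) ->
  psocle B (mdivx m p) p.+1.
Proof.
move=> BB [[_ TB genB] minT] mx Tm degT.
have [mp0 mz] := mx.
have [monB borB] := BB.
move=> mu; split.
- move=> Bw.
  case: (pickP (fun i : 'I_n => (i < p.+1) && (0 < mu i))) => [i /andP[Hi Hmu] | Hnone].
    by exists i.
  exfalso.
  have mu0 : forall i : 'I_n, i <= p -> mu i = 0.
    move=> i Hi; move: (Hnone i); by rewrite ltnS Hi /= lt0n => /negbFE/eqP.
  pose T' := fun t => T t /\ t <> m.
  have gen' : bgenerates T' B.
    split => //; first by move=> t [Tt _]; apply: TB.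
    move=> B' BB' T'B'.
    have B'm : B' m.
      pose C := fun u : mono n =>
        (exists v : mono n, (forall k, v k <= u k) /\ mdeg v <= mdeg m /\ B' v)
        \/ mdeg m <= \sum_(k : 'I_n | k <= p) u k.
      have [monB' borB'] := BB'.
      have BC : borel C.
        split.
        - move=> a b [[v [vle [dv Bv]]] | D].
            left; exists v; split => // k; rewrite ffunE; exact: leq_trans (vle k) (leq_addr _ _).
          right; apply: leq_trans D _; apply: leq_sum => k _; by rewrite ffunE leq_addr.
        - move=> u i j ij uj.
          have nij : i != j by apply/eqP => eij; move: ij; rewrite eij ltnn.
          move=> [[v [vle [dv Bv]]] | D].
          + left; case: (posnP (v j)) => [vj0 | vjpos].
            * exists v; split => // k; rewrite ffunE.
              case: eqP => [->|_]; first exact: leq_trans (vle i) (leqnSn _).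
              case: eqP => [->|_]; [by rewrite vj0 | exact: vle].
            * exists (bmove v i j); split; [|split].
              -- move=> k; rewrite !ffunE; case: eqP => _; first by rewrite ltnS vle.
                 case: eqP => _; last exact: vle.
                 by rewrite -!subn1 leq_sub2r.
              -- by rewrite mdeg_bmove.
              -- exact: borB'.
          + right; apply: leq_trans D _.
            have := sum_bmove (fun k => k <= p) nij uj => /= H.
            rewrite -(leq_add2r (i <= p)) -H leq_add2l.
            case Hj: (j <= p) => //.
            by rewrite (ltnW (leq_trans ij Hj)).
      have TC : forall t, T t -> C t.
        move=> t Tt; case: (eqVneq t m) => [->|ne].
          right; rewrite (split_sum m p).
          have -> : \sum_(i : 'I_n | p < i) m i = 0 by rewrite big1 // => i Hi; apply: mz.
          by rewrite addn0.
        left; exists t; split => //; split; first exact: degT.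
        apply: T'B'; split => //; exact/eqP.
      have := genB C BC TC _ Bw; case => [[v [vle [dv B'v]]] | D].
        apply: (fill BB' mx) B'v _ erefl dv => i Hi.
        apply: leq_trans (vle i) _; rewrite !ffunE mu0 //=.
        case: eqP => [->|_] //; exact: leq_pred.
      exfalso; move: D.
      have E1 : \sum_(k : 'I_n | k <= p) (mmul mu (mdivx m p)) k = \sum_(k : 'I_n | k <= p) mdivx m p k.
        by apply: eq_bigr => k Hk; rewrite ffunE mu0.
      have E2 : mdeg (mdivx m p) + 1 = mdeg m.
        rewrite (_ : 1 = \sum_(k < n) e p k); last by symmetry; exact: (sum_e predT p).
        rewrite /mdeg -big_split /=; apply: eq_bigr => k _.
        rewrite !ffunE; case: eqP => [->|_]; by rewrite ?addn1 ?addn0 ?prednK.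
      rewrite E1 -E2 (split_sum _ p) addn1 ltnNge => /negP; apply.
      exact: leq_addr.
    apply: genB => // t Tt; case: (eqVneq t m) => [->|ne] //.
    apply: T'B'; split => //; exact/eqP.
  have := minT T' (fun t H => proj1 H) gen' m Tm.
  by case.
- move=> [i [Hi Hmu]]; rewrite ltnS in Hi.
  case: (eqVneq i p) => [eip | nip].
  + subst i.
    have -> : mmul mu (mdivx m p) = mmul m (mdivx mu p).
      apply/ffunP => k; rewrite !ffunE; case: eqP => [->|_]; last exact: addnC.
      case E1: (mu p) Hmu => [|a] // _; case E2: (m p) mp0 => [|b] // _ /=.
      by rewrite !addSn addnC.
    apply: monB; exact: TB.
  + have ip : i < p by rewrite ltn_neqAle Hi andbT; exact: nip.
    have -> : mmul mu (mdivx m p) = mmul (bmove m i p) (mdivx mu i).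
      apply/ffunP => k; rewrite !ffunE.
      have [->|ki] := eqVneq k i.
        rewrite ?eqxx (negbTE nip).
        case E1: (mu i) Hmu => [|a] // _ /=.
        by rewrite !addSn addnC.
      have [->|kp] := eqVneq k p; by rewrite ?eqxx addnC.
    apply: monB; apply: borB => //; exact: TB.
Qed.
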